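(* Assume that at every optimizer of problem (P4) the density components satisfy $\rho^{(l)}_e(t)\ge\epsilon(\beta)$ for all $e,t,l$. Let (P4') be the problem obtained from (P4) by adding variables $\vartheta^{(l)}_e(t)\in\mathbb{R}$, adding the constraints $(\vartheta^{(l)}_e(t))^2\le\nu^{(l)}_e(t)\rho^{(l)}_e(t)$ for all $e,t,l$, and replacing the objective term $\frac1N\sum_{e,t,l}\nu^{(l)}_e(t)\rho^{(l)}_e(t)$ by $\frac1N\sum_{e,t,l}(\vartheta^{(l)}_e(t))^2$. Then (P4') is equivalent to (P4) in the sense that their optimal objective values coincide and the set of optimizers of (P4) is the projection of the set of optimizers of (P4'). Further, for any feasible point of (P4'), with $u_e(t)=\sum_i\gamma^{(i)}x_{e,i}(t)$ and $\hat J$ the (P4') objective value at that point, one has $\mathrm{Prob}^N\big(\mathbb{E}_{\mathbb{P}(u)}[H(u;\rho)]\ge\hat J\big)\ge1-\beta$.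
   Context: Data: integers $n,T,N\ge1$, $\mathcal E=\{1,\dots,n\}$, $\mathcal T=\{0,\dots,T-1\}$, $\mathcal L=\{1,\dots,N\}$, $\mathcal O=\{1,\dots,m\}$; speed-limit values $0<\gamma^{(1)}<\dots<\gamma^{(m)}$, $\Gamma=\{\gamma^{(i)}\}$; for each $e$: $h_e>0$, $\bar\rho_e>0$, $\bar f_e>0$, $\bar u_e>0$ with $\bar u_e\bar\rho_e>\bar f_e$, $\tau_e=\bar f_e/(\bar u_e\bar\rho_e-\bar f_e)$, $\rho^c_e(v)=\tau_e\bar\rho_e\bar u_e/(\tau_e\bar u_e+v)$; constant $\bar\eta>0$. Random vector $\varpi=(\omega,\rho(0),r^{in},r^{o})$ ($\omega(t)\ge0$, $\rho(0)\in\mathbb{R}^n_{\ge0}$, $r^{in}_e(t),r^o_e(t)\in[0,1)$) with light-tailed distribution $\mathbb{P}_\varpi$; $\varpi^{(l)}=(\omega^{(l)},\rho^{(l)}(0),r^{in,(l)},r^{o,(l)})$, $l\in\mathcal L$, are $N$ i.i.d. samples; $\kappa^{(l)}_e(t)=\frac{1-r^{o,(l)}_{e-1}(t)}{1-r^{in,(l)}_e(t)}$. For $u\in\Gamma^{nT}$, $\mathbb{P}(u)$ is the law of the trajectory $\rho$ given by $\rho_1(t+1)=\rho_1(t)+h_1(\omega(t)-u_1(t)\rho_1(t))$, $\rho_e(t+1)=\rho_e(t)+h_e\kappa_e(t)u_{e-1}(t)\rho_{e-1}(t)-h_eu_e(t)\rho_e(t)$ ($e\ge2$) when $\varpi\sim\mathbb{P}_\varpi$,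 supported on $\{\rho:0\le\rho_e(t)\le\rho^c_e(u_e(t))\}$; $H(u;\rho)=\frac1T\sum_{e,t}\rho_e(t)u_e(t)$; $\beta\in(0,1)$ and $\epsilon(\beta)>0$ is a Wasserstein radius (1-norm) such that, with $\hat{\mathbb{P}}(u)$ the empirical distribution of the sample trajectories, $\mathbb{P}(u)$ lies in the Wasserstein ball of radius $\epsilon(\beta)$ around $\hat{\mathbb{P}}(u)$ intersected with the light-tailed distributions on its support with $\mathrm{Prob}^N$-probability at least $1-\beta$; $\mathrm{Prob}^N$ is the product probability over the samples. Problem (P4): maximize $-\lambda\epsilon(\beta)-\frac1N\sum_{e,t,l}\bar f_e\bar\rho_e\eta^{(l)}_e(t)+\frac1N\sum_{e,t,l}\nu^{(l)}_e(t)\rho^{(l)}_e(t)$ over $x_{e,i}(t),y^{(l)}_{e,i}(t),z^{(l)}_{e,i}(t),\rho^{(l)}_e(t),\lambda,\mu^{(l)}_e(t),\nu^{(l)}_e(t),\eta^{(l)}_e(t)$ subject to, for all $e,i,t,l$: $x_{e,i}(t)\in\{0,1\}$, $\sum_ix_{e,i}(t)=1$, $\gamma^{(1)}\le\sum_i\gamma^{(i)}x_{e,i}(t)\le\gamma^{(m)}$; $0\le z^{(l)}_{e,i}(t)\le\bar\eta x_{e,i}(t)$, $\eta^{(l)}_e(t)-\bar\eta(1-x_{e,i}(t))\le z^{(l)}_{e,i}(t)\le\eta^{(l)}_e(t)$, $0\le y^{(l)}_{e,i}(t)\le\bar\rho_ex_{e,i}(t)$, $\rho^{(l)}_e(t)-\bar\rho_e(1-x_{e,i}(t))\le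 y^{(l)}_{e,i}(t)\le\rho^{(l)}_e(t)$; $\rho^{(l)}_1(t+1)=\rho^{(l)}_1(t)+h_1\omega^{(l)}(t)-h_1\sum_i\gamma^{(i)}y^{(l)}_{1,i}(t)$; for $e\ge2$: $\rho^{(l)}_e(t+1)=\rho^{(l)}_e(t)+h_e\kappa^{(l)}_e(t)\sum_i\gamma^{(i)}y^{(l)}_{e-1,i}(t)-h_e\sum_i\gamma^{(i)}y^{(l)}_{e,i}(t)$ and $\kappa^{(l)}_e(t)\sum_i\gamma^{(i)}y^{(l)}_{e-1,i}(t)\le\min\{\bar f_e,\tau_e\bar u_e(\bar\rho_e-\rho^{(l)}_e(t))\}$; $\rho^{(l)}_e(0)$ equal to the sample data; $\sum_i\gamma^{(i)}(\bar\rho_e-\bar f_e/\bar u_e)z^{(l)}_{e,i}(t)-\mu^{(l)}_e(t)+\bar f_e\eta^{(l)}_e(t)\ge0$; $\nu^{(l)}_e(t)=\mu^{(l)}_e(t)+\frac1T\sum_i\gamma^{(i)}x_{e,i}(t)$; $\max_{e,t}|\nu^{(l)}_e(t)|\le\lambda$; $0\le\eta^{(l)}_e(t)\le\bar\eta$. *)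

(* Defs.v *)
From HB Require Import structures.
From mathcomp Require Import all_boot all_order all_algebra.
From mathcomp Require Import all_classical all_reals all_analysis.
Set Implicit Arguments.
Unset Strict Implicit.
Unset Printing Implicit Defensive.
Import Order.TTheory GRing.Theory Num.Theory.
Local Open Scope ring_scope.
Local Open Scope classical_set_scope.

(* Conventions:
   - edges e are 'I_n (paper's edge e+1), times t are 'I_T (paper's t),
     speed-limit indices i are 'I_m.+1 (paper's i+1; so the paper's m is our m.+1),
     samples l are 'I_N (paper's l+1).                                          *)

Section Defs.
Variable R : realType.
Variables n m T N : nat.

Record netdata := NetData {
  gam  : 'I_m.+1 -> R;
  hh   : 'I_n -> R;
  rhob : 'I_n -> R;
  fb   : 'I_n -> R;
  ub   : 'I_n -> R;
  etab : R
}.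

Variable D : netdata.

Definition tau (e : 'I_n) : R := fb D e / (ub D e * rhob D e - fb D e).
Definition rhoc (e : 'I_n) (v : R) : R :=
  tau e * rhob D e * ub D e / (tau e * ub D e + v).

(* Values of the random vector varpi = (omega, rho(0), r^in, r^o). *)
Definition Vt : Type :=
  ((T.-tuple R * n.-tuple R) * (n.-tuple (T.-tuple R) * n.-tuple (T.-tuple R)))%type.

Definition omg (v : Vt) (t : nat) : R := nth 0 (v.1.1 : seq R) t.
Definition rho0 (v : Vt) (e : 'I_n) : R := tnth v.1.2 e.
Definition rin (v : Vt) (e : 'I_n) (t : nat) : R := nth 0 (tnth v.2.1 e : seq R) t.
Definition rout (v : Vt) (e : 'I_n) (t : nat) : R := nth 0 (tnth v.2.2 e : seq R) t.

(* the preceding edge e-1 (only used for e > 0) *)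
Definition opred (e : 'I_n) : 'I_n :=
  Ordinal (leq_ltn_trans (leq_pred e) (ltn_ord e)).

Definition kap (v : Vt) (e : 'I_n) (t : nat) : R :=
  (1 - rout v (opred e) t) / (1 - rin v e t).

Definition admissible (v : Vt) : Prop :=
  (forall t : 'I_T, 0 <= omg v t) /\ (forall e, 0 <= rho0 v e) /\
  (forall e (t : 'I_T), 0 <= rin v e t < 1) /\
  (forall e (t : 'I_T), 0 <= rout v e t < 1).

Definition normV (v : Vt) : R :=
  \sum_(t < T) `|omg v t| + \sum_(e < n) `|rho0 v e|
  + \sum_(e < n) \sum_(t < T) (`|rin v e t| + `|rout v e t|).

Definition onat (f : 'I_T -> R) (t : nat) : R :=
  if insub t is Some i then f i else 0.

Fixpoint trajn (u : 'I_n -> 'I_T -> R) (v : Vt) (t : nat) : 'I_n -> R :=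
  match t with
  | 0 => fun e => rho0 v e
  | t'.+1 => let r := trajn u v t' in
     fun e => if (e : nat) == 0%N
       then r e + hh D e * (omg v t' - onat (u e) t' * r e)
       else r e + hh D e * kap v e t' * onat (u (opred e)) t' * r (opred e)
                - hh D e * onat (u e) t' * r e
  end.

Definition Xt : Type := n.-tuple (T.-tuple R).
Definition xc (xi : Xt) (e : 'I_n) (t : 'I_T) : R := tnth (tnth xi e) t.
Definition mkX (f : 'I_n -> 'I_T -> R) : Xt := [tuple [tuple f e t | t < T] | e < n].

Definition traj (u : 'I_n -> 'I_T -> R) (v : Vt) : Xt :=
  mkX (fun e t => trajn u v t e).

Definition Hcost (u : 'I_n -> 'I_T -> R) (xi : Xt) : R :=
  T%:R^-1 * \sum_(e < n) \sum_(t < T) xc xi e t * u e t.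

Definition Xi (u : 'I_n -> 'I_T -> R) : set Xt :=
  [set xi | forall e t, 0 <= xc xi e t <= rhoc e (u e t)].

Definition norm1 (xi : Xt) : R := \sum_(e < n) \sum_(t < T) `|xc xi e t|.
Definition dist1 (xi xi' : Xt) : R :=
  \sum_(e < n) \sum_(t < T) `|xc xi e t - xc xi' e t|.

Definition lawP (Pw : set Vt -> \bar R) (u : 'I_n -> 'I_T -> R) : set Xt -> \bar R :=
  pushforward Pw (traj u).

Definition empirical (xs : 'I_N -> Xt) : set Xt -> \bar R :=
  fun A => (N%:R^-1 * \sum_(l < N) \1_A (xs l))%:E.

Definition coupling (P1 P2 : set Xt -> \bar R) (pi : probability (Xt * Xt)%type R) : Prop :=
  (forall A, measurable A -> pi (A `*` setT) = P1 A) /\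
  (forall B, measurable B -> pi (setT `*` B) = P2 B).

Definition wasserstein (P1 P2 : set Xt -> \bar R) : \bar R :=
  ereal_inf [set c | exists pi : probability (Xt * Xt)%type R,
     coupling P1 P2 pi /\ c = (\int[pi]_z (dist1 z.1 z.2)%:E)%E].

Definition light_tailed_on (S : set Xt) (P : set Xt -> \bar R) : Prop :=
  P (~` S) = 0%E /\
  exists a : R, 1 < a /\ (\int[P]_xi (expR (norm1 xi `^ a))%:E < +oo)%E.

Definition in_ball_LT (eps : R) (S : set Xt) (P1 P2 : set Xt -> \bar R) : Prop :=
  (wasserstein P1 P2 <= eps%:E)%E /\ light_tailed_on S P1.

Record P4var := P4Var {
  vx   : 'I_n -> 'I_m.+1 -> 'I_T -> R;
  vy   : 'I_N -> 'I_n -> 'I_m.+1 -> 'I_T -> R;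
  vz   : 'I_N -> 'I_n -> 'I_m.+1 -> 'I_T -> R;
  vrho : 'I_N -> 'I_n -> 'I_T.+1 -> R;
  vlam : R;
  vmu  : 'I_N -> 'I_n -> 'I_T -> R;
  vnu  : 'I_N -> 'I_n -> 'I_T -> R;
  veta : 'I_N -> 'I_n -> 'I_T -> R
}.

Definition uofx (x : 'I_n -> 'I_m.+1 -> 'I_T -> R) (e : 'I_n) (t : 'I_T) : R :=
  \sum_(i < m.+1) gam D i * x e i t.

Definition tm (t : nat) : 'I_T.+1 := inord t.

Variable eps : R.

Definition feas4 (s : 'I_N -> Vt) (p : P4var) : Prop :=
  let x := vx p in let y := vy p in let z := vz p in let rho := vrho p in
  let lam := vlam p in let mu := vmu p in let nu := vnu p in let eta := veta p in
  (forall e i t, x e i t = 0 \/ x e i t = 1) /\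
  (forall e t, \sum_(i < m.+1) x e i t = 1) /\
  (forall e t, gam D ord0 <= \sum_(i < m.+1) gam D i * x e i t <= gam D ord_max) /\
  (forall l e i t, 0 <= z l e i t <= etab D * x e i t) /\
  (forall l e i t, eta l e t - etab D * (1 - x e i t) <= z l e i t <= eta l e t) /\
  (forall l e i t, 0 <= y l e i t <= rhob D e * x e i t) /\
  (forall l e i (t : 'I_T),
     rho l e (tm t) - rhob D e * (1 - x e i t) <= y l e i t <= rho l e (tm t)) /\
  (forall l (e : 'I_n) (t : 'I_T), (e : nat) = 0%N ->
     rho l e (tm t.+1) = rho l e (tm t) + hh D e * omg (s l) t
                         - hh D e * \sum_(i < m.+1) gam D i * y l e i t) /\
  (forall l (e : 'I_n) (t : 'I_T), (0 < e)%N ->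
     rho l e (tm t.+1) = rho l e (tm t)
        + hh D e * kap (s l) e t * \sum_(i < m.+1) gam D i * y l (opred e) i t
        - hh D e * \sum_(i < m.+1) gam D i * y l e i t) /\
  (forall l (e : 'I_n) (t : 'I_T), (0 < e)%N ->
     kap (s l) e t * \sum_(i < m.+1) gam D i * y l (opred e) i t
       <= Num.min (fb D e) (tau e * ub D e * (rhob D e - rho l e (tm t)))) /\
  (forall l e, rho l e (tm 0) = rho0 (s l) e) /\
  (forall l e (t : 'I_T), 0 <= \sum_(i < m.+1) gam D i * (rhob D e - fb D e / ub D e) * z l e i t
                      - mu l e t + fb D e * eta l e t) /\
  (forall l e (t : 'I_T), nu l e t = mu l e t + T%:R^-1 * \sum_(i < m.+1) gam D i * x e i t) /\
  (forall l e t, `|nu l e t| <= lam) /\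
  (forall l e t, 0 <= eta l e t <= etab D).

Definition obj_base (p : P4var) : R :=
  - vlam p * eps
  - N%:R^-1 * \sum_(e < n) \sum_(t < T) \sum_(l < N) fb D e * rhob D e * veta p l e t.

Definition obj4 (p : P4var) : R :=
  obj_base p + N%:R^-1 * \sum_(e < n) \sum_(t < T) \sum_(l < N) vnu p l e t * vrho p l e (tm t).

Definition feas4' (s : 'I_N -> Vt) (p : P4var) (th : 'I_N -> 'I_n -> 'I_T -> R) : Prop :=
  feas4 s p /\ (forall l e (t : 'I_T), th l e t ^+ 2 <= vnu p l e t * vrho p l e (tm t)).

Definition obj4' (p : P4var) (th : 'I_N -> 'I_n -> 'I_T -> R) : R :=
  obj_base p + N%:R^-1 * \sum_(e < n) \sum_(t < T) \sum_(l < N) th l e t ^+ 2.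

Definition optval4 (s : 'I_N -> Vt) : \bar R :=
  ereal_sup [set (obj4 p)%:E | p in feas4 s].
Definition optval4' (s : 'I_N -> Vt) : \bar R :=
  ereal_sup [set (obj4' pt.1 pt.2)%:E | pt in [set pt | feas4' s pt.1 pt.2]].

Definition optimizer4 (s : 'I_N -> Vt) (p : P4var) : Prop :=
  feas4 s p /\ forall q, feas4 s q -> obj4 q <= obj4 p.
Definition optimizer4' (s : 'I_N -> Vt) (p : P4var) th : Prop :=
  feas4' s p th /\ forall q th', feas4' s q th' -> obj4' q th' <= obj4' p th.

End Defs.

(* Main.v *)
Require Import Defs.
From HB Require Import structures.
From mathcomp Require Import all_boot all_order all_algebra.
From mathcomp Require Import all_classical all_reals all_analysis.
From mathcomp Require Import measurable_realfun.
From mathcomp Require Import lra.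
Import Order.TTheory GRing.Theory Num.Theory.
Local Open Scope ring_scope.
Local Open Scope classical_set_scope.
Set Implicit Arguments.
Unset Strict Implicit.

Lemma bigM_eq {R : realType} {x w v M : R} : (x = 0 \/ x = 1) ->
  0 <= w <= M * x -> v - M * (1 - x) <= w <= v -> w = v * x.
Proof.
move=> [->|->]; rewrite ?mulr0 ?mulr1 ?subrr ?mulr0 ?subr0 => /andP[h1 h2] /andP[h3 h4].
  by apply/eqP; rewrite eq_le h2 h1.
by apply/eqP; rewrite eq_le h4 h3.
Qed.

Section S.
Variables (R : realType) (n m T N : nat) (D : netdata R n m).
Hypothesis HT : (0 < T)%N.
Hypothesis Hgam0 : 0 < gam D ord0.
Hypothesis Hrhob : forall e, 0 < rhob D e.
Hypothesis Hfb : forall e, 0 < fb D e.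
Hypothesis Hub : forall e, 0 < ub D e.
Hypothesis Hcap : forall e, fb D e < ub D e * rhob D e.
Variable s : 'I_N -> Vt R n T.

Lemma feas_y {p : P4var R n m T N} : feas4 D s p ->
  forall l e i (t : 'I_T), vy p l e i t = vrho p l e (tm T t) * vx p e i t.
Proof.
move=> [hx [_ [_ [_ [_ [hy1 [hy2 _]]]]]]] l e i t.
have := hy1 l e i t. have := hy2 l e i t. have := hx e i t. move=> a b c. exact: (bigM_eq a c b).
Qed.

Lemma feas_z {p : P4var R n m T N} : feas4 D s p ->
  forall l e i (t : 'I_T), vz p l e i t = veta p l e t * vx p e i t.
Proof.
move=> [hx [_ [_ [hz1 [hz2 _]]]]] l e i t.
exact: (bigM_eq (hx e i t) (hz1 l e i t) (hz2 l e i t)).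
Qed.

Lemma feas_x1 {p : P4var R n m T N} : feas4 D s p ->
  forall e t, exists i, vx p e i t = 1.
Proof.
move=> [hx [hs _]] e t; apply: contrapT => /forallNP h.
have : \sum_(i < m.+1) vx p e i t = 0.
  by apply: big1 => i _; case: (hx e i t) => // /h.
by rewrite hs => /eqP; rewrite oner_eq0.
Qed.

Lemma feas_rho0 {p : P4var R n m T N} : feas4 D s p ->
  forall l e (t : 'I_T), 0 <= vrho p l e (tm T t).
Proof.
move=> hf l e t; have [i hi] := feas_x1 hf e t.
have := feas_y hf l e i t; rewrite hi mulr1 => <-.
by case: hf => [_ [_ [_ [_ [_ [hy1 _]]]]]]; case/andP: (hy1 l e i t).
Qed.

Lemma feas_xunique {p : P4var R n m T N} : feas4 D s p ->
  forall e t, exists i, forall j, vx p e j t = if j == i then 1 else 0.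
Proof.
move=> hf e t; have [i hi] := feas_x1 hf e t; exists i.
case: hf => [hx [hs _]].
have h0 : \sum_(j < m.+1 | j != i) vx p e j t = 0.
  by move: (hs e t); rewrite (bigD1 i) //= hi => /eqP; rewrite -{2}(addr0 1) => /eqP /addrI.
move=> j; case: eqP => [->//|/eqP ji].
apply: (psumr_eq0P _ h0) => // k _; by case: (hx e k t) => ->.
Qed.

Lemma feas_u {p : P4var R n m T N} : feas4 D s p ->
  forall e t, exists i, uofx D (vx p) e t = gam D i.
Proof.
move=> hf e t; have [i hi] := feas_xunique hf e t; exists i.
rewrite /uofx (bigD1 i) //= hi eqxx mulr1 big1 ?addr0 // => j /negbTE ji.
by rewrite hi ji mulr0.
Qed.

Lemma feas_upos {p : P4var R n m T N} : feas4 D s p ->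
  forall e t, 0 < uofx D (vx p) e t.
Proof.
move=> hf e t; case: hf => [_ [_ [hg _]]]; case/andP: (hg e t) => h _.
exact: lt_le_trans Hgam0 h.
Qed.


Lemma sumy {p : P4var R n m T N} : feas4 D s p -> forall l e (t : 'I_T),
  \sum_(i < m.+1) gam D i * vy p l e i t = vrho p l e (tm T t) * uofx D (vx p) e t.
Proof.
move=> hf l e t; rewrite /uofx mulr_sumr; apply: eq_bigr => i _.
by rewrite (feas_y hf) mulrCA.
Qed.

Lemma sumz {p : P4var R n m T N} : feas4 D s p -> forall l e (t : 'I_T),
  \sum_(i < m.+1) gam D i * (rhob D e - fb D e / ub D e) * vz p l e i t
  = (rhob D e - fb D e / ub D e) * veta p l e t * uofx D (vx p) e t.
Proof.
move=> hf l e t; rewrite /uofx mulr_sumr; apply: eq_bigr => i _.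
rewrite (feas_z hf); set c := (_ - _); set g := gam D i; set x := vx p e i t.
by rewrite -!mulrA mulrCA; congr (_ * _); rewrite mulrCA.
Qed.

Lemma cpos e : 0 < rhob D e - fb D e / ub D e.
Proof.
rewrite subr_gt0 ltr_pdivrMr ?Hub // mulrC; exact: Hcap.
Qed.

Definition modp (p : P4var R n m T N) : P4var R n m T N :=
  P4Var (vx p) (vy p) (vz p) (vrho p) (vlam p)
   (fun l e t => if vnu p l e t < 0 then - (T%:R^-1 * \sum_(i < m.+1) gam D i * vx p e i t)
                 else vmu p l e t)
   (fun l e t => if vnu p l e t < 0 then 0 else vnu p l e t) (veta p).

Lemma mod_feas {p : P4var R n m T N} : feas4 D s p -> feas4 D s (modp p).
Proof.
move=> hf.
have hz := sumz hf; have hu := feas_upos hf.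
case: hf => [h1 [h2 [h3 [h4 [h5 [h6 [h7 [h8 [h9 [h10 [h11 [h12 [h13 [h14 h15]]]]]]]]]]]]]].
do 11 (split; first by []).
split.
  move=> l e t /=; case: ifP => _; last exact: h12.
  rewrite opprK -addrA; apply: addr_ge0.
    rewrite [X in 0 <= X](hz l e t); apply: mulr_ge0; last exact: ltW.
    apply: mulr_ge0; first exact: ltW (cpos e).
    by case/andP: (h15 l e t).
  apply: addr_ge0; last (apply: mulr_ge0; [exact: ltW (Hfb e) | by case/andP: (h15 l e t)]).
  apply: mulr_ge0; first by rewrite invr_ge0 ler0n.
  exact: ltW (hu e t).
split.
  move=> l e t /=; case: ifP => _; last exact: h13.
  by rewrite addrC subrr.
split; last by [].
move=> l e t /=; case: ifP => _; last exact: h14.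
rewrite normr0; exact: le_trans (normr_ge0 _) (h14 l e t).
Qed.

Lemma mod_nonneg {p : P4var R n m T N} : feas4 D s p ->
  forall l e (t : 'I_T), 0 <= vnu (modp p) l e t * vrho p l e (tm T t).
Proof.
move=> hf l e t /=; case: ifPn => h; first by rewrite mul0r.
by apply: mulr_ge0; [rewrite leNgt | exact: feas_rho0 hf l e t].
Qed.

Lemma mod_ge {p : P4var R n m T N} : feas4 D s p ->
  forall l e (t : 'I_T), vnu p l e t * vrho p l e (tm T t) <= vnu (modp p) l e t * vrho p l e (tm T t).
Proof.
move=> hf l e t /=; case: ifPn => h //; rewrite mul0r.
by apply: mulr_le0_ge0; [exact: ltW | exact: feas_rho0 hf l e t].
Qed.

Definition th_of (p : P4var R n m T N) : 'I_N -> 'I_n -> 'I_T -> R :=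
  fun l e t => Num.sqrt (vnu p l e t * vrho p l e (tm T t)).

Lemma th_feas {p : P4var R n m T N} : feas4 D s p ->
  (forall l e (t : 'I_T), 0 <= vnu p l e t * vrho p l e (tm T t)) ->
  feas4' D s p (th_of p) /\ forall eps, obj4' D eps p (th_of p) = obj4 D eps p.
Proof.
move=> hf h0; split.
  by split => // l e t; rewrite /th_of sqr_sqrtr; [exact: lexx | exact: h0].
move=> eps; rewrite /obj4' /obj4; congr (_ + _ * _).
apply: eq_bigr => e _; apply: eq_bigr => t _; apply: eq_bigr => l _.
by rewrite /th_of sqr_sqrtr //; exact: h0.
Qed.

Lemma obj4'_le {p : P4var R n m T N} th eps : feas4' D s p th ->
  obj4' D eps p th <= obj4 D eps p.
Proof.
move=> [hf hth]; rewrite /obj4' /obj4 lerD2l; apply: ler_wpM2l.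
  by rewrite invr_ge0 ler0n.
apply: ler_sum => e _; apply: ler_sum => t _; apply: ler_sum => l _; exact: hth.
Qed.

Lemma mod_obj {p : P4var R n m T N} eps : feas4 D s p ->
  obj4 D eps p <= obj4 D eps (modp p).
Proof.
move=> hf; rewrite /obj4 /=; rewrite lerD2l; apply: ler_wpM2l.
  by rewrite invr_ge0 ler0n.
apply: ler_sum => e _; apply: ler_sum => t _; apply: ler_sum => l _; exact: mod_ge.
Qed.

End S.

Lemma sum3_eq0 (R : realType) (n T N : nat) (F : 'I_n -> 'I_T -> 'I_N -> R) :
  (forall e t l, 0 <= F e t l) ->
  \sum_(e < n) \sum_(t < T) \sum_(l < N) F e t l = 0 -> forall e t l, F e t l = 0.
Proof.
move=> h0 hs e t l.
have h1 : \sum_(t < T) \sum_(l < N) F e t l = 0.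
  apply: (psumr_eq0P _ hs) => // e' _.
  by apply: sumr_ge0 => t' _; apply: sumr_ge0 => l' _; exact: h0.
have h2 : \sum_(l < N) F e t l = 0.
  apply: (psumr_eq0P _ h1) => // t' _.
  by apply: sumr_ge0 => l' _; exact: h0.
by apply: (psumr_eq0P _ h2) => // l' _; exact: h0.
Qed.

Lemma part1 (R : realType) (n m T N : nat) (D : netdata R n m)
  (HT : (0 < T)%N) (HN : (0 < N)%N) (Hgam0 : 0 < gam D ord0)
  (Hrhob : forall e, 0 < rhob D e) (Hfb : forall e, 0 < fb D e)
  (Hub : forall e, 0 < ub D e) (Hcap : forall e, fb D e < ub D e * rhob D e)
  (eps : R) (s : 'I_N -> Vt R n T) :
  optval4 D eps s = optval4' D eps s /\
  (forall p, optimizer4 D eps s p <-> exists th, optimizer4' D eps s p th).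
Proof.
have modP : forall p : P4var R n m T N, feas4 D s p ->
   feas4' D s (modp D p) (th_of (modp D p)) /\
   obj4 D eps p <= obj4' D eps (modp D p) (th_of (modp D p)).
  move=> p hp; have hq : feas4 D s (modp D p) by apply: mod_feas.
  have hnn : forall l e (t : 'I_T), 0 <= vnu (modp D p) l e t * vrho (modp D p) l e (tm T t).
    move=> l e t; apply: mod_nonneg => //; exact: hp.
  have [hf' hobj] := th_feas hq hnn.
  split => //; rewrite hobj; apply: mod_obj => //; exact: hp.
split.
  apply/eqP; rewrite eq_le; apply/andP; split.
    apply: ub_ereal_sup => _ [p hp <-].
    have [hf' hle] := modP p hp.
    apply: (@le_trans _ _ (obj4' D eps (modp D p) (th_of (modp D p)))%:E); first by rewrite lee_fin.
    apply: ereal_sup_ubound.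
    by exists (modp D p, th_of (modp D p)).
  apply: ub_ereal_sup => _ [[p th] hp <-] /=.
  apply: (@le_trans _ _ (obj4 D eps p)%:E); first by rewrite lee_fin; exact: (obj4'_le _ hp).
  apply: ereal_sup_ubound.
  by exists p => //; case: hp.
move=> p; split.
  move=> [hf hopt].
  have hq : feas4 D s (modp D p) by apply: mod_feas.
  have heq : obj4 D eps (modp D p) = obj4 D eps p.
    apply/eqP; rewrite eq_le (hopt _ hq) /=; apply: mod_obj => //; exact: hf.
  have hnn : forall l e (t : 'I_T), 0 <= vnu p l e t * vrho p l e (tm T t).
    move=> l e t.
    have := sum3_eq0 (F := fun e t l => vnu (modp D p) l e t * vrho p l e (tm T t)
                         - vnu p l e t * vrho p l e (tm T t)).
    move=> /(_ _ _ e t l) h.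
    have {}h := h _ _; move: h.
    have h1 : forall e' t' l', 0 <= vnu (modp D p) l' e' t' * vrho p l' e' (tm T t')
                         - vnu p l' e' t' * vrho p l' e' (tm T t').
      move=> e' t' l'; rewrite subr_ge0; apply: mod_ge => //; exact: hf.
    move=> /(_ h1) h.
    suff /h /eqP : \sum_(e < n) \sum_(t < T) \sum_(l < N) (vnu (modp D p) l e t * vrho p l e (tm T t)
                         - vnu p l e t * vrho p l e (tm T t)) = 0.
      rewrite subr_eq0 => /eqP <-; apply: mod_nonneg => //; exact: hf.
    move: heq; rewrite /obj4 => /addrI /mulfI.
    rewrite invr_eq0 pnatr_eq0 -lt0n HN => /(_ isT) h'.
    rewrite (eq_bigr (fun e => \sum_(t < T) \sum_(l < N) vnu (modp D p) l e t * vrho p l e (tm T t)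
                          - \sum_(t < T) \sum_(l < N) vnu p l e t * vrho p l e (tm T t))).
      by rewrite sumrB h' subrr.
    move=> e' _; rewrite -sumrB; apply: eq_bigr => t' _; by rewrite -sumrB.
  have [hf' hobj] := th_feas hf hnn.
  exists (th_of p); split => // q th' hq'.
  rewrite hobj; apply: le_trans (obj4'_le eps hq') _.
  by apply: hopt; case: hq'.
move=> [th [hf' hopt]]; split; first by case: hf'.
move=> q hq; have [hq' hle] := modP q hq.
apply: le_trans hle _; apply: le_trans (hopt _ _ hq') _.
exact: obj4'_le eps hf'.
Qed.

Section gen_eq.
Local Open Scope ereal_scope.
Context d (T : measurableType d) (R : realType) (D : set T).
  Import HBNNSimple.

Let eqI0 (m2 m1 : set T -> \bar R) (f : T -> \bar R) :
  (forall A, measurable A -> A `<=` D -> m1 A = m2 A) ->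
  [set sintegral m1 h | h in
    [set h : {nnsfun T >-> R} | (forall x, (h x)%:E <= (f \_ D) x)]] `<=`
  [set sintegral m2 h | h in
    [set h : {nnsfun T >-> R} | (forall x, (h x)%:E <= (f \_ D) x)]].
Proof.
move=> m12 _ [h hfD <-] /=; exists h => //; apply: eq_fsbigr => r _.
have [hrD|hrD] := pselect (h @^-1` [set r] `<=` D); first by rewrite m12.
suff : r = 0%R by move=> ->; rewrite !mul0e.
apply: contra_notP hrD => /eqP r0 t/= htr.
have := hfD t.
rewrite /patch/=; case: ifPn; first by rewrite inE.
move=> tD.
move: r0; rewrite -htr => ht0.
by rewrite le_eqVlt eqe (negbTE ht0)/= lte_fin// ltNge// fun_ge0.
Qed.

Lemma gen_eq_integral (m2 m1 : set T -> \bar R) (f : T -> \bar R) :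
    (forall A, measurable A -> A `<=` D -> m1 A = m2 A) ->
  \int[m1]_(x in D) f x = \int[m2]_(x in D) f x.
Proof.
move=> m12; rewrite /integral funepos_restrict funeneg_restrict.
by congr (ereal_sup _ - ereal_sup _); rewrite eqEsubset; split;
  apply: eqI0 => A /m12 // /[apply].
Qed.
End gen_eq.

Definition fstX d (X : measurableType d) : X * X -> X := fst.
Definition sndX d (X : measurableType d) : X * X -> X := snd.
HB.instance Definition _ d (X : measurableType d) :=
  isMeasurableFun.Build _ _ _ _ (@fstX d X) measurable_fst.
HB.instance Definition _ d (X : measurableType d) :=
  isMeasurableFun.Build _ _ _ _ (@sndX d X) measurable_snd.


Lemma meas_bigmax d (X : measurableType d) (R : realType) (I : Type) (s : seq I)
  (M0 : R) (F : I -> X -> R) : (forall i, measurable_fun setT (F i)) ->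
  measurable_fun setT (fun x => \big[Num.max/M0]_(i <- s) F i x).
Proof.
move=> mF; elim: s => [|i s IH].
  under eq_fun do rewrite big_nil; exact: measurable_cst.
under eq_fun do rewrite big_cons.
exact: measurable_realfun.measurable_maxr.
Qed.

Lemma dro_bound d (X : measurableType d) (R : realType) (N : nat) (HN : (0 < N)%N)
  (dist : X -> X -> R)
  (mdist : measurable_fun setT (fun z : X * X => dist z.1 z.2))
  (mdistr : forall y, measurable_fun setT (fun x => dist x y))
  (dist0 : forall x y, 0 <= dist x y) (distxx : forall x, dist x x = 0)
  (dtri : forall x y z, dist x z <= dist x y + dist y z)
  (H : X -> R) (mH : measurable_fun setT H) (S : set X) (mS : measurable S)
  (H0 : forall x, S x -> 0 <= H x)
  (xs : 'I_N -> X) (a : 'I_N -> R) (lam eps : R) (lam0 : 0 <= lam)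
  (ha : forall x, S x -> forall l, a l <= H x + lam * dist x (xs l))
  (P1 : set X -> \bar R) (hnull : P1 (~` S) = 0%E)
  (hW : (ereal_inf [set c | exists pi : probability (X * X)%type R,
       ((forall A, measurable A -> pi (A `*` setT) = P1 A) /\
        (forall B, measurable B -> pi (setT `*` B) = (N%:R^-1 * \sum_(l < N) \1_B (xs l))%:E)) /\
       c = (\int[pi]_z (dist z.1 z.2)%:E)%E] <= eps%:E)%E) :
  ((N%:R^-1 * \sum_(l < N) a l - lam * eps)%:E <= \int[P1]_x (H x)%:E)%E.
Proof.
set M0 := - \sum_(l < N) `|a l|.
have M0a : forall l, M0 <= a l.
  move=> l; rewrite /M0 (bigD1 l) //= opprD.
  apply: le_trans (_ : - `|a l| <= a l); last by rewrite lerNnormlW.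
  by rewrite lerBlDr lerDl sumr_ge0.
have M00 : M0 <= 0 by rewrite /M0 oppr_le0 sumr_ge0.
pose phi x' := \big[Num.max/M0]_(l < N) (a l - lam * dist x' (xs l)).
have F1 : forall x', M0 <= phi x'.
  move=> x'; rewrite /phi; elim/big_rec: _ => [//|l acc _ h].
  by rewrite le_max h orbT.
have F2 : forall l, a l <= phi (xs l).
  by move=> l; rewrite /phi (bigD1 l) //= distxx mulr0 subr0 le_max lexx.
have F3 : forall x x', S x -> phi x' <= H x + lam * dist x x'.
  move=> x x' Sx; rewrite /phi; elim/big_rec: _ => [|l acc _ h].
    apply: le_trans M00 _; apply: addr_ge0; [exact: H0|exact: mulr_ge0].
  rewrite ge_max h andbT.
  have h1 := ha x Sx l.
  have h2 : lam * dist x (xs l) <= lam * dist x x' + lam * dist x' (xs l).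
    by rewrite -mulrDr; apply: ler_wpM2l.
  lra.
have F4 : measurable_fun setT phi.
  apply: meas_bigmax => l; apply: measurable_realfun.measurable_funB; first exact: measurable_cst.
  by apply: measurable_realfun.measurable_funM; [exact: measurable_cst | exact: mdistr].
set A := N%:R^-1 * \sum_(l < N) a l.
apply/lee_subgt0Pr => del del0.
pose del' := del / (lam + 1).
have lam1 : 0 < lam + 1 by lra.
have del'0 : 0 < del' by apply: divr_gt0.
have hdel : del' * (lam + 1) = del by rewrite /del' mulfVK // gt_eqF.
have : (ereal_inf [set c | exists pi : probability (X * X)%type R,
       ((forall A, measurable A -> pi (A `*` setT) = P1 A) /\
        (forall B, measurable B -> pi (setT `*` B) = (N%:R^-1 * \sum_(l < N) \1_B (xs l))%:E)) /\
       c = (\int[pi]_z (dist z.1 z.2)%:E)%E] < (eps + del')%:E)%E.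
  by apply: le_lt_trans hW _; rewrite lte_fin ltrDl.
move=> /ereal_inf_lt [c [pi [[hc1 hc2] hc]] hlt]; rewrite {c}hc in hlt.
set Id := (\int[pi]_z (dist z.1 z.2)%:E)%E in hlt.
pose mu := distribution pi (@fstX d X).
pose nu := distribution pi (@sndX d X).
have hmu : forall B, measurable B -> mu B = P1 B.
  move=> B mB; rewrite -hc1 //; rewrite /mu /distribution /pushforward; congr (pi _).
  by apply/seteqP; split => z /=; [move=> h; split | case].
have hnu : forall B, measurable B -> nu B = (N%:R^-1 * \sum_(l < N) \1_B (xs l))%:E.
  move=> B mB; rewrite -hc2 //; rewrite /nu /distribution /pushforward; congr (pi _).
  by apply/seteqP; split => z /=; [move=> h; split | case].
have mHp : measurable_fun setT (fun x => Num.max (H x) 0).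
  by apply: measurable_realfun.measurable_maxr => //; exact: measurable_cst.
have step1 : (\int[P1]_x (H x)%:E = \int[mu]_x (H x)%:E)%E.
  by apply: gen_eq_integral => B mB _; rewrite hmu.
have mS' : measurable (~` S) by exact: measurableC.
have step2 : (\int[mu]_x (H x)%:E = \int[mu]_x (Num.max (H x) 0)%:E)%E.
  apply: ae_eq_integral => //.
  - by apply/measurable_realfun.measurable_EFinP.
  - by apply/measurable_realfun.measurable_EFinP.
  exists (~` S); split => //; first by rewrite -hnull -hmu.
  move=> x /= hx Sx; apply: hx => _; rewrite max_l //; exact: H0.
have step3 : (\int[mu]_x (Num.max (H x) 0)%:E = \int[pi]_z (Num.max (H z.1) 0)%:E)%E.
  rewrite /mu /distribution ge0_integral_pushforward //.
  - by apply/measurable_realfun.measurable_EFinP.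
  - by move=> x _; rewrite lee_fin le_max lexx orbT.
set X0 := (\int[pi]_z (Num.max (H z.1) 0)%:E)%E in step3.
have mfst : measurable_fun [set: (X * X)%type] (@fst X X) by exact: measurable_fst.
have msnd : measurable_fun [set: (X * X)%type] (@snd X X) by exact: measurable_snd.
have mHp1 : measurable_fun setT (fun z : X * X => ((Num.max (H z.1) 0)%:E : \bar R)).
  apply/measurable_realfun.measurable_EFinP; exact: (measurableT_comp mHp mfst).
have mdist' : measurable_fun setT (fun z : X * X => ((dist z.1 z.2)%:E : \bar R)).
  by apply/measurable_realfun.measurable_EFinP.
have mphi2 : measurable_fun setT (fun z : X * X => ((phi z.2 - M0)%:E : \bar R)).
  apply/measurable_realfun.measurable_EFinP.
  apply: measurable_realfun.measurable_funB; last exact: measurable_cst.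
  exact: (measurableT_comp F4 msnd).
have h1 : forall z : X * X, setT z -> (0 <= (Num.max (H z.1) 0)%:E)%E.
  by move=> z _; rewrite lee_fin le_max lexx orbT.
have h2 : forall z : X * X, setT z -> (0 <= lam%:E * (dist z.1 z.2)%:E)%E.
  by move=> z _; rewrite -EFinM lee_fin mulr_ge0.
have h12 : forall z : X * X, setT z ->
    (0 <= (Num.max (H z.1) 0)%:E + lam%:E * (dist z.1 z.2)%:E)%E.
  by move=> z _; apply: adde_ge0; [exact: h1|exact: h2].
have h3 : forall z : X * X, setT z -> (0 <= (- M0)%:E)%E.
  by move=> z _; rewrite lee_fin oppr_ge0.
have m2 : measurable_fun setT (fun z : X * X => (lam%:E * (dist z.1 z.2)%:E)%E).
  by apply: emeasurable_funM => //; exact: measurable_cst.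
have m12 : measurable_fun setT
    (fun z : X * X => ((Num.max (H z.1) 0)%:E + lam%:E * (dist z.1 z.2)%:E)%E).
  exact: emeasurable_funD.
have m3 : measurable_fun setT (fun z : X * X => ((- M0)%:E : \bar R)).
  exact: measurable_cst.
have hJ : (\int[pi]_z ((Num.max (H z.1) 0)%:E + (lam%:E * (dist z.1 z.2)%:E) + (- M0)%:E)
           = X0 + lam%:E * Id + (- M0)%:E)%E.
  rewrite ge0_integralD // ge0_integralD // ge0_integralZl //; last by move=> z _; rewrite lee_fin.
  rewrite (_ : (fun z => (- M0)%:E) = cst (- M0)%:E) // integral_cst //.
  rewrite -[in RHS](mule1 (- M0)%:E); congr (_ + _); congr (_ * _)%E; exact: probability_setT.
have hphi0 : forall z : X * X, setT z -> (0 <= (phi z.2 - M0)%:E)%E.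
  by move=> z _; rewrite lee_fin subr_ge0; exact: F1.
have step5 : (\int[pi]_z (phi z.2 - M0)%:E <=
    \int[pi]_z ((Num.max (H z.1) 0)%:E + (lam%:E * (dist z.1 z.2)%:E) + (- M0)%:E))%E.
  apply: ae_ge0_le_integral => //.
  - by move=> z _; apply: adde_ge0; [exact: h12|exact: (h3 z)].
  - exact: emeasurable_funD.
  exists ((~` S) `*` setT); split.
  - exact: measurableX.
  - exact: (etrans (hc1 _ mS') hnull).
  move=> z /= hz; split => // Sz; apply: hz => _.
  rewrite -EFinM -!EFinD lee_fin lerD2r.
  apply: le_trans (F3 z.1 z.2 Sz) _; rewrite lerD2r le_max lexx //.
have mphi : measurable_fun setT (fun x : X => ((phi x - M0)%:E : \bar R)).
  apply/measurable_EFinP; apply: measurable_funB; last exact: measurable_cst.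
  exact: F4.
have step6 : (\int[pi]_z (phi z.2 - M0)%:E = \int[nu]_x (phi x - M0)%:E)%E.
  rewrite /nu /distribution ge0_integral_pushforward //.
  by move=> x _; rewrite lee_fin subr_ge0; exact: F1.
pose xs' (k : nat) := if insub k is Some l then xs l else xs (Ordinal HN).
have xs'E : forall k : 'I_N, xs' k = xs k by move=> k; rewrite /xs' valK.
have Ninv0 : (0 <= N%:R^-1 :> R) by rewrite invr_ge0.
pose Emp := mscale (NngNum Ninv0) (msum (fun k => \d_(xs' k)) N).
have step7 : (\int[nu]_x (phi x - M0)%:E = \int[Emp]_x (phi x - M0)%:E)%E.
  apply: eq_measure_integral => B mB _.
  apply: (etrans (hnu B mB)); rewrite /Emp /mscale /msum /= EFinM; congr (_ * _)%E.
  rewrite -sumEFin; apply: eq_bigr => k _; by rewrite /dirac xs'E.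
have step8 : (\int[Emp]_x (phi x - M0)%:E = (N%:R^-1 * \sum_(l < N) (phi (xs l) - M0))%:E)%E.
  rewrite /Emp ge0_integral_mscale //; last by move=> x _; rewrite lee_fin subr_ge0; exact: F1.
  rewrite ge0_integral_measure_sum //; last by move=> x _; rewrite lee_fin subr_ge0; exact: F1.
  rewrite EFinM /= -sumEFin; congr (_ * _)%E; apply: eq_bigr => k _.
  by rewrite integral_dirac // diracT mul1e xs'E.
have step9 : A - M0 <= N%:R^-1 * \sum_(l < N) (phi (xs l) - M0).
  have -> : A - M0 = N%:R^-1 * \sum_(l < N) (a l - M0).
    rewrite sumrB sumr_const card_ord /A mulrBr; congr (_ - _).
    by rewrite -[M0 *+ N]mulr_natl mulrA mulVf ?mul1r // pnatr_eq0 -lt0n.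
  by apply: ler_wpM2l => //; apply: ler_sum => l _; rewrite lerD2r.
have hG : ((A - M0)%:E <= X0 + lam%:E * Id + (- M0)%:E)%E.
  rewrite -hJ; apply: le_trans step5; rewrite step6 step7 step8 lee_fin; exact: step9.
have Id0 : (0 <= Id)%E by apply: integral_ge0 => z _; rewrite lee_fin.
have X00 : (0 <= X0)%E by apply: integral_ge0 => z _; rewrite lee_fin le_max lexx orbT.
rewrite step1 step2 step3.
clearbody Id X0.
clear hJ step5; move: step6 step7 step8 => _ _ _.
case: Id hG hlt Id0 => [c||] hG hlt Id0 //.
clear step1 step2 step3.
case: X0 hG X00 => [x||] hG X00 //; last by rewrite leey.
move: hG hlt Id0; rewrite -!EFinM -!EFinD !lee_fin lte_fin => hG hlt c0.
have k1 : lam * c <= lam * (eps + del') by apply: ler_wpM2l => //; exact: ltW.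
have k2 : lam * del' <= del.
  rewrite -hdel mulrDr mulr1 mulrC lerDl; exact: ltW.
move: k1; rewrite mulrDr => k1.
lra.
Qed.

Section C.
Variables (R : realType) (n T : nat).

Lemma meas_xc (e : 'I_n) (t : 'I_T) : measurable_fun setT (fun xi : Xt R n T => xc xi e t).
Proof.
rewrite /xc.
exact: (measurableT_comp (measurable_tnth t) (measurable_tnth e)).
Qed.

Lemma meas_dist_pair : measurable_fun setT (fun z : (Xt R n T * Xt R n T)%type => dist1 z.1 z.2).
Proof.
rewrite /dist1; apply: measurable_sum => e; apply: measurable_sum => t.
apply: measurableT_comp; first exact: normr_measurable.
apply: measurable_funB.
  exact: (measurableT_comp (meas_xc e t) measurable_fst).
exact: (measurableT_comp (meas_xc e t) measurable_snd).
Qed.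

Lemma meas_distr (y : Xt R n T) : measurable_fun setT (fun x => dist1 x y).
Proof.
rewrite /dist1; apply: measurable_sum => e; apply: measurable_sum => t.
apply: measurableT_comp; first exact: normr_measurable.
apply: measurable_funB; first exact: meas_xc.
exact: measurable_cst.
Qed.

Lemma meas_H (u : 'I_n -> 'I_T -> R) : measurable_fun setT (Hcost u).
Proof.
rewrite /Hcost; apply: measurable_funM; first exact: measurable_cst.
apply: measurable_sum => e; apply: measurable_sum => t.
apply: measurable_funM; first exact: meas_xc.
exact: measurable_cst.
Qed.

Lemma dist1_ge0 (x y : Xt R n T) : 0 <= dist1 x y.
Proof. by apply: sumr_ge0 => e _; apply: sumr_ge0 => t _. Qed.

Lemma dist1_xx (x : Xt R n T) : dist1 x x = 0.
Proof. by apply: big1 => e _; apply: big1 => t _; rewrite subrr normr0. Qed.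

Lemma dist1_tri (x y z : Xt R n T) : dist1 x z <= dist1 x y + dist1 y z.
Proof.
rewrite /dist1 -big_split; apply: ler_sum => e _; rewrite -big_split.
apply: ler_sum => t _; exact: ler_distD.
Qed.

Variables (m : nat) (D : netdata R n m).

Lemma meas_Xi (u : 'I_n -> 'I_T -> R) : measurable (Xi D u).
Proof.
have -> : Xi D u = \bigcap_(e in setT) \bigcap_(t in setT)
    ((fun xi => xc xi e t) @^-1` `[0, rhoc D e (u e t)]).
  apply/seteqP; split => xi /=.
    by move=> h e _ t _ /=; rewrite in_itv /= h.
  by move=> h e t; have := h e I t I; rewrite /= in_itv.
apply: fin_bigcap_measurable; first exact: finite_finset.
move=> e _; apply: fin_bigcap_measurable; first exact: finite_finset.
move=> t _; rewrite -[X in measurable X]setTI; apply: meas_xc => //.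
Qed.

End C.

From mathcomp Require Import ring.
Lemma coord_ineq (R : realType) (u Ti lam nu mu eta r xi c K F : R) :
  0 <= u -> 0 <= Ti -> nu = mu + Ti * u -> `|nu| <= lam -> 0 <= eta -> mu <= eta * K ->
  K * c = F -> 0 <= F -> 0 <= xi <= c ->
  nu * r - F * eta <= Ti * (xi * u) + lam * `|xi - r|.
Proof.
move=> u0 Ti0 hnu hlam eta0 hmu hKc F0 /andP[xi0 xic].
have h1 : nu * r - nu * xi <= lam * `|xi - r|.
  rewrite -mulrBr; apply: le_trans (ler_norm _) _.
  by rewrite normrM distrC; apply: ler_wpM2r.
have h2 : mu * xi <= F * eta.
  have [mu0|mu0] := lerP mu 0.
    apply: le_trans (_ : 0 <= _); last exact: mulr_ge0.
    exact: mulr_le0_ge0.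
  apply: le_trans (_ : mu * c <= _); first by apply: ler_wpM2l => //; exact: ltW.
  apply: le_trans (_ : eta * K * c <= _).
    apply: ler_wpM2r => //; exact: le_trans xic.
  by rewrite -mulrA hKc mulrC.
have h3 : nu * xi = mu * xi + Ti * (xi * u) by rewrite hnu; ring.
lra.
Qed.

Lemma Kc_id (R : realType) (n m : nat) (D : netdata R n m) e (v : R) :
  0 < rhob D e -> 0 < fb D e -> 0 < ub D e -> fb D e < ub D e * rhob D e -> 0 <= v ->
  (v * (rhob D e - fb D e / ub D e) + fb D e) * rhoc D e v = fb D e * rhob D e.
Proof.
move=> hr hf hu hc hv.
have d0 : ub D e * rhob D e - fb D e != 0 by rewrite subr_eq0 gt_eqF.
have d1 : ub D e != 0 by rewrite gt_eqF.
have d2 : fb D e * ub D e + v * (ub D e * rhob D e - fb D e) != 0.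
  apply: lt0r_neq0; have ha : 0 < fb D e * ub D e by exact: mulr_gt0.
  have hb : 0 <= v * (ub D e * rhob D e - fb D e) by apply: mulr_ge0 => //; rewrite subr_ge0 ltW.
  lra.
rewrite /rhoc /tau.
have d3 : fb D e / (ub D e * rhob D e - fb D e) * ub D e + v != 0.
  apply: lt0r_neq0; have ha : 0 < fb D e / (ub D e * rhob D e - fb D e) * ub D e.
    by apply: mulr_gt0 => //; apply: divr_gt0 => //; rewrite subr_gt0.
  lra.
field.
by rewrite d0 d1 d2.
Qed.


Lemma onat_ord (R : realType) (T : nat) (f : 'I_T -> R) (t : 'I_T) : onat f t = f t.
Proof. by rewrite /onat valK. Qed.

Lemma traj_eq (R : realType) (n m T N : nat) (D : netdata R n m) (s : 'I_N -> Vt R n T)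
  (p : P4var R n m T N) (Hgam0 : 0 < gam D ord0) :
  feas4 D s p -> forall l e (t : 'I_T),
  vrho p l e (tm T t) = xc (traj D (uofx D (vx p)) (s l)) e t.
Proof.
move=> hf l e t; rewrite /xc /traj /mkX !tnth_mktuple.
have hy := sumy hf.
case: hf => [_ [_ [_ [_ [_ [_ [_ [h8 [h9 [_ [h10 _]]]]]]]]]]].
move: e; case: t => k hk /=.
elim: k hk => [|k IH] hk e; first by rewrite h10.
have hk' : (k < T)%N := ltnW hk.
have IH' := IH hk'.
have ho : forall f : 'I_T -> R, onat f k = f (Ordinal hk') := fun f => onat_ord f (Ordinal hk').
have hyk := hy l e (Ordinal hk'); have hyk' := hy l (opred e) (Ordinal hk'); simpl in hyk, hyk'.
rewrite /= !ho -!IH'.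
case: (eqVneq (e : nat) 0%N) => he.
  have := h8 l e (Ordinal hk') he; rewrite /= => ->.
  rewrite hyk; ring.
have he' : (0 < e)%N by rewrite lt0n.
have := h9 l e (Ordinal hk') he'; rewrite /= => ->.
rewrite hyk hyk'; ring.
Qed.

Lemma sum_bound (R : realType) (n m T N : nat) (D : netdata R n m) (s : 'I_N -> Vt R n T)
  (p : P4var R n m T N) (Hgam0 : 0 < gam D ord0)
  (Hrhob : forall e, 0 < rhob D e) (Hfb : forall e, 0 < fb D e)
  (Hub : forall e, 0 < ub D e) (Hcap : forall e, fb D e < ub D e * rhob D e) :
  feas4 D s p -> forall xi, Xi D (uofx D (vx p)) xi -> forall l,
  \sum_(e < n) \sum_(t < T) (vnu p l e t * vrho p l e (tm T t) - fb D e * rhob D e * veta p l e t)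
   <= Hcost (uofx D (vx p)) xi + vlam p * dist1 xi (traj D (uofx D (vx p)) (s l)).
Proof.
move=> hf xi hxi l.
have hz := sumz hf; have hup := feas_upos Hgam0 hf.
have htr := traj_eq Hgam0 hf.
case: hf => [_ [_ [_ [_ [_ [_ [_ [_ [_ [_ [_ [h12 [h13 [h14 h15]]]]]]]]]]]]]].
rewrite /Hcost /dist1 mulr_sumr mulr_sumr -big_split; apply: ler_sum => e _.
rewrite mulr_sumr mulr_sumr -big_split; apply: ler_sum => t _.
rewrite -htr.
apply: (@coord_ineq R _ _ _ _ (vmu p l e t) _ _ _ (rhoc D e (uofx D (vx p) e t))
   (uofx D (vx p) e t * (rhob D e - fb D e / ub D e) + fb D e)).
- exact: ltW (hup e t).
- by rewrite invr_ge0.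
- exact: h13.
- exact: h14.
- by case/andP: (h15 l e t).
- have := h12 l e t; rewrite hz => h.
  have -> : veta p l e t * (uofx D (vx p) e t * (rhob D e - fb D e / ub D e) + fb D e)
     = (rhob D e - fb D e / ub D e) * veta p l e t * uofx D (vx p) e t + fb D e * veta p l e t by ring.
  lra.
- apply: Kc_id => //; exact: ltW (hup e t).
- by apply: mulr_ge0; exact: ltW.
- exact: hxi.
Qed.

Lemma obj_id (R : realType) (n m T N : nat) (D : netdata R n m) (eps : R) (p : P4var R n m T N) :
  obj4 D eps p = N%:R^-1 * \sum_(l < N) \sum_(e < n) \sum_(t < T)
     (vnu p l e t * vrho p l e (tm T t) - fb D e * rhob D e * veta p l e t) - vlam p * eps.
Proof.
have -> : \sum_(l < N) \sum_(e < n) \sum_(t < T)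
     (vnu p l e t * vrho p l e (tm T t) - fb D e * rhob D e * veta p l e t)
  = \sum_(e < n) \sum_(t < T) \sum_(l < N) vnu p l e t * vrho p l e (tm T t)
    - \sum_(e < n) \sum_(t < T) \sum_(l < N) fb D e * rhob D e * veta p l e t.
  rewrite exchange_big -sumrB; apply: eq_bigr => e _.
  rewrite exchange_big -sumrB; apply: eq_bigr => t _.
  by rewrite -sumrB.
rewrite /obj4 /obj_base; ring.
Qed.

Unset Implicit Arguments.
Set Strict Implicit.
Theorem lemma4
  (R : realType) (n m T N : nat)
  (Hn : (0 < n)%N) (HT : (0 < T)%N) (HN : (0 < N)%N)
  (D : netdata R n m)
  (Hgam0 : 0 < gam D ord0)
  (Hgam : forall i j : 'I_m.+1, (i < j)%N -> gam D i < gam D j)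
  (Hh : forall e, 0 < hh D e) (Hrhob : forall e, 0 < rhob D e)
  (Hfb : forall e, 0 < fb D e) (Hub : forall e, 0 < ub D e)
  (Hcap : forall e, fb D e < ub D e * rhob D e)
  (Hetab : 0 < etab D)
  (beta eps : R) (Hbeta : 0 < beta < 1) (Heps : 0 < eps)
  (* the random vector varpi and its law P_varpi *)
  (Pw : probability (Vt R n T) R)
  (HPw_adm : {ae Pw, forall v, admissible v})
  (HPw_LT : exists a : R, 1 < a /\ (\int[Pw]_v (expR (normV v `^ a))%:E < +oo)%E)
  (* N i.i.d. samples varpi^(l) on a probability space (Omega, Prob^N) *)
  (d : measure_display) (Omega : measurableType d) (Q : probability Omega R)
  (varpi : 'I_N -> Omega -> Vt R n T)
  (Hvarpi_meas : forall l, measurable_fun setT (varpi l))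
  (Hiid : forall A : 'I_N -> set (Vt R n T), (forall l, measurable (A l)) ->
     Q (\bigcap_(l in [set: 'I_N]) (varpi l @^-1` A l)) = (\prod_(l < N) Pw (A l))%E)
  (* P(u) is supported on {0 <= rho_e(t) <= rho^c_e(u_e(t))} *)
  (Hsupp : forall u : 'I_n -> 'I_T -> R, (forall e t, exists i, u e t = gam D i) ->
     lawP D Pw u (~` Xi D u) = 0%E)
  (* defining property of the Wasserstein radius eps = epsilon(beta) *)
  (Heps_def : forall u : 'I_n -> 'I_T -> R, (forall e t, exists i, u e t = gam D i) ->
     exists E : set Omega, measurable E /\ ((1 - beta)%:E <= Q E)%E /\
       forall w, E w ->
         in_ball_LT eps (Xi D u) (lawP D Pw u)
           (empirical (fun l => traj D u (varpi l w)))) :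
  (* equivalence of (P4) and (P4') *)
  (forall s : 'I_N -> Vt R n T,
     (forall p, optimizer4 D eps s p ->
        forall l e (t : 'I_T), eps <= vrho p l e (tm T t)) ->
     optval4 D eps s = optval4' D eps s /\
     (forall p, optimizer4 D eps s p <-> exists th, optimizer4' D eps s p th))
  /\
  (* finite-sample guarantee for feasible points of (P4') *)
  (forall x : 'I_n -> 'I_m.+1 -> 'I_T -> R,
     exists E : set Omega, measurable E /\ ((1 - beta)%:E <= Q E)%E /\
       forall w, E w ->
         forall p th, feas4' D (fun l => varpi l w) p th -> vx p = x ->
           ((obj4' D eps p th)%:E <=
              \int[lawP D Pw (uofx D x)]_xi (Hcost (uofx D x) xi)%:E)%E).
Proof.
split.
  move=> s _; exact: part1.
have Hgpos : forall i : 'I_m.+1, 0 < gam D i.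
  move=> i; case: (posnP i) => [i0|ip].
    by have -> : i = ord0 by apply/val_inj.
  exact: (lt_trans Hgam0 (Hgam ord0 i ip)).
move=> x.
case: (pselect (forall e t, exists i, uofx D x e t = gam D i)) => hu; last first.
  exists setT; split; first exact: measurableT.
  split.
    have -> : Q setT = 1%E by exact: probability_setT.
    rewrite lee_fin; case/andP: Hbeta => b0 b1; lra.
  move=> w _ p th [hf _] hx; exfalso; apply: hu; rewrite -hx; exact: feas_u hf.
have [E [mE [hQ hE]]] := Heps_def _ hu.
exists E; split => //; split => // w Ew p th hf' hx.
have hf := hf'.1.
apply: (@le_trans _ _ (obj4 D eps p)%:E); first by rewrite lee_fin; exact: (obj4'_le eps hf').
have [hW [hnull _]] := hE w Ew.
rewrite obj_id; subst x.
have lam0 : 0 <= vlam p.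
  case: hf => [_ [_ [_ [_ [_ [_ [_ [_ [_ [_ [_ [_ [_ [h14 _]]]]]]]]]]]]]].
  exact: le_trans (normr_ge0 _) (h14 (Ordinal HN) (Ordinal Hn) (Ordinal HT)).
have hup := feas_upos Hgam0 hf.
have H0 : forall xi, Xi D (uofx D (vx p)) xi -> 0 <= Hcost (uofx D (vx p)) xi.
  move=> xi hxi; rewrite /Hcost; apply: mulr_ge0; first by rewrite invr_ge0.
  apply: sumr_ge0 => e _; apply: sumr_ge0 => t _; apply: mulr_ge0.
    by case/andP: (hxi e t).
  exact: ltW (hup e t).
have ha : forall xi, Xi D (uofx D (vx p)) xi -> forall l,
   \sum_(e < n) \sum_(t < T) (vnu p l e t * vrho p l e (tm T t) - fb D e * rhob D e * veta p l e t)
   <= Hcost (uofx D (vx p)) xi + vlam p * dist1 xi (traj D (uofx D (vx p)) (varpi l w)).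
  move=> xi hxi l; exact: (sum_bound Hgam0 Hrhob Hfb Hub Hcap hf hxi l).
exact: (@dro_bound _ (Xt R n T) R N HN (@dist1 R n T) (@meas_dist_pair R n T) (@meas_distr R n T)
   (@dist1_ge0 R n T) (@dist1_xx R n T) (@dist1_tri R n T) (Hcost (uofx D (vx p)))
   (@meas_H R n T (uofx D (vx p))) (Xi D (uofx D (vx p))) (@meas_Xi R n T m D (uofx D (vx p)))
   H0 (fun l => traj D (uofx D (vx p)) (varpi l w))
   (fun l => \sum_(e < n) \sum_(t < T) (vnu p l e t * vrho p l e (tm T t) - fb D e * rhob D e * veta p l e t))
   (vlam p) eps lam0 ha (lawP D Pw (uofx D (vx p))) hnull hW).
Qed.
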